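(* Let $\mathbb I$ be an index coding problem with message set ${\cal W}$ and let ${\cal W}'\subseteq{\cal W}$. If there is a ${\cal W}'$-restricted internal conflict, then the restricted problem ${\mathbb I}_{{\cal W}'}$ admits no valid scalar linear index code of length $2$ over any finite field. If there are no ${\cal W}'$-restricted internal conflicts, then ${\mathbb I}_{{\cal W}'}$ admits a valid scalar linear index code of length $2$ over every sufficiently large finite field.
   Context: Index coding setup: An index coding problem $\mathbb I$ over a finite field $\mathbb F$ consists of a set of messages ${\cal W}=\{W_1,\dots,W_n\}$ (each message is a symbol of $\mathbb F$ in the scalar setting), a set of receivers $[1:T]$, and for each receiver $j$ a demand set $D(j)\subseteq{\cal W}$ and a side-information set $S(j)\subseteq {\cal W}\setminus D(j)$. Every message is demanded by at least one receiver. For a receiver $j$ and $W_k\in D(j)$, the interfering set is $Interf_k(j)={\cal W}\setminus(\{W_k\}\cup S(j))$; if $W_k\notin D(j)$ then $Interf_k(j)=\emptyset$. A scalar linear index code of length $L$ over $\mathbb F$ is an assignment of vectors $V_1,\dots,V_n\in\mathbb F^L$ to the messages; the source broadcasts $\sum_{i=1}^n V_iW_i\in\mathbb F^L$, and the code is valid if every receiver $j$ can recover every message of $D(j)$ from the broadcast codeword and the messages in $S(j)$. Two distinct messages $W_i,W_k$ are in conflict if there is a receiver $j$ with $W_k\in D(j)$ and $W_i\in Interf_k(j)$, or a receiver $j$ with $W_i\in D(j)$ and $W_k\in Interf_i(j)$. Alignment graph: the graph with vertex set ${\cal W}$ in which distinct $W_a,W_b$ are adjacent if there exist a receiver $j$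 and a message $W_k\in D(j)$ with $W_k\notin\{W_a,W_b\}$ and $W_a,W_b\notin S(j)$. An alignment set is the vertex set of a connected component of the alignment graph. An internal conflict is a conflict between two messages lying in the same alignment set. Restricted problem: for ${\cal W}'\subseteq{\cal W}$, the ${\cal W}'$-restricted index coding problem ${\mathbb I}_{{\cal W}'}$ has message set ${\cal W}'$, receivers the receivers $j$ of $\mathbb I$ with $D(j)\cap{\cal W}'\neq\emptyset$, and for each such $j$ demand set $D(j)\cap{\cal W}'$ and side-information set $S(j)\cap{\cal W}'$. The ${\cal W}'$-restricted alignment graph, alignment sets and internal conflicts are the alignment graph, alignment sets and internal conflicts of ${\mathbb I}_{{\cal W}'}$ (conflicts being computed in ${\mathbb I}_{{\cal W}'}$). *)

(* Defs.v *)
From HB Require Import structures.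
From mathcomp Require Import all_boot all_order all_algebra all_field.
Set Implicit Arguments. Unset Strict Implicit. Unset Printing Implicit Defensive.
Import GRing.Theory.
Local Open Scope ring_scope.

(* An index coding problem: messages indexed by a finite type M (the set
   W = M), receivers indexed by a finite type R, demand sets D j and
   side-information sets S j. *)
Definition index_problem (M R : finType) (D S : R -> {set M}) : Prop :=
  (forall j, [disjoint S j & D j]) /\ (forall m : M, exists j, m \in D j).

Definition rreceiver (M R : finType) (D : R -> {set M}) (W' : {set M}) (j : R) : bool :=
  D j :&: W' != set0.
Definition rdemand (M R : finType) (D : R -> {set M}) (W' : {set M}) (j : R) : {set M} :=
  D j :&: W'.
Definition rside (M R : finType) (S : R -> {set M}) (W' : {set M}) (j : R) : {set M} :=
  S j :&: W'.

Definition rinterf (M R : finType) (D S : R -> {set M}) (W' : {set M}) (k : M) (j : R)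
  : {set M} :=
  if k \in rdemand D W' j then W' :\: (k |: rside S W' j) else set0.

Definition rconflict (M R : finType) (D S : R -> {set M}) (W' : {set M}) (i k : M) : bool :=
  [&& i \in W', k \in W', i != k &
      [exists j, rreceiver D W' j &&
        ((i \in rinterf D S W' k j) || (k \in rinterf D S W' i j))]].

Definition ralign_edge (M R : finType) (D S : R -> {set M}) (W' : {set M}) (a b : M) : bool :=
  [&& a \in W', b \in W', a != b &
      [exists j, rreceiver D W' j &&
        [exists k, [&& k \in rdemand D W' j, k \notin [set a; b],
                       a \notin rside S W' j & b \notin rside S W' j]]]].

Definition same_ralign_set (M R : finType) (D S : R -> {set M}) (W' : {set M}) (a b : M)
  : bool :=
  [&& a \in W', b \in W' & connect (ralign_edge D S W') a b].

Definition has_rinternal_conflict (M R : finType) (D S : R -> {set M}) (W' : {set M})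
  : bool :=
  [exists a, exists b, rconflict D S W' a b && same_ralign_set D S W' a b].

Definition codeword (M : finType) (F : fieldType) (L : nat) (W' : {set M})
  (V : M -> 'rV[F]_L) (w : M -> F) : 'rV[F]_L :=
  \sum_(i in W') w i *: V i.

(* Valid scalar linear index code of length L over F for I_{W'}: every
   receiver of I_{W'} recovers each demanded message from the codeword and
   the messages in its side information (messages outside S j :&: W' are
   masked to 0 in the decoder's input). *)
Definition valid_rcode (M R : finType) (F : fieldType) (L : nat)
  (D S : R -> {set M}) (W' : {set M}) (V : M -> 'rV[F]_L) : Prop :=
  forall j, rreceiver D W' j -> forall k, k \in rdemand D W' j ->
    exists dec : 'rV[F]_L -> (M -> F) -> F,
      forall w : M -> F,
        dec (codeword W' V w) (fun i => if i \in rside S W' j then w i else 0) = w k.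

(* Main.v *)
Require Import Defs.
From HB Require Import structures.
From mathcomp Require Import all_boot all_order all_algebra all_field.
From mathcomp Require Import ring.
From Stdlib Require Import FunctionalExtensionality.
Set Implicit Arguments. Unset Strict Implicit. Unset Printing Implicit Defensive.
Import GRing.Theory.
Local Open Scope ring_scope.

Lemma notin_side (M R : finType) (D S : R -> {set M}) (W' : {set M}) j k :
  index_problem D S -> k \in rdemand D W' j -> k \notin rside S W' j.
Proof.
move=> [Hd _]; rewrite /rdemand /rside !inE => /andP[kD _].
by rewrite (disjointFl (Hd j) kD).
Qed.

Lemma kill (M R : finType) (S : R -> {set M}) (W' : {set M}) (F : fieldType) L
  (V : M -> 'rV[F]_L) j k (dec : 'rV[F]_L -> (M -> F) -> F) :
  (forall w : M -> F,
        dec (codeword W' V w) (fun i => if i \in rside S W' j then w i else 0) = w k) ->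
  forall w, codeword W' V w = 0 -> (forall i, i \in rside S W' j -> w i = 0) -> w k = 0.
Proof.
move=> H w cw0 ws.
have := H w; have := H (fun _ => 0).
have -> : codeword W' V (fun _ => 0) = 0 by rewrite /codeword big1 // => i _; rewrite scale0r.
rewrite cw0.
have -> : (fun i => if i \in rside S W' j then w i else 0) =
          (fun i => if i \in rside S W' j then 0 else 0).
  by apply: functional_extensionality => i; case: ifP => // /ws.
by move=> -> ->.
Qed.

Lemma cw_sub (M : finType) (F : fieldType) L (W' A : {set M}) (V : M -> 'rV[F]_L) w :
  (forall i, i \notin A -> w i = 0) -> A \subset W' ->
  codeword W' V w = \sum_(i in A) w i *: V i.
Proof.
move=> wA AW; rewrite /codeword (big_setID A) /= (setIidPr AW).
rewrite [X in _ + X]big1 ?addr0 // => i; rewrite !inE => /andP[iA _].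
by rewrite wA // scale0r.
Qed.

Definition par (F : fieldType) (u v : 'rV[F]_2) : Prop :=
  u ord0 ord0 * v ord0 ord_max = u ord0 ord_max * v ord0 ord0.

Lemma ord2P (l : 'I_2) : l = ord0 \/ l = ord_max.
Proof. by case: l => [[|[|//]]] ?; [left|right]; apply: val_inj. Qed.

Lemma rv2_nz (F : fieldType) (v : 'rV[F]_2) :
  v != 0 -> v ord0 ord0 != 0 \/ v ord0 ord_max != 0.
Proof.
move=> nz; case: (eqVneq (v ord0 ord0) 0) => h0; last by left.
case: (eqVneq (v ord0 ord_max) 0) => h1; last by right.
case/eqP: nz; apply/rowP => l; rewrite mxE; case: (ord2P l) => ->; done.
Qed.

Lemma par_trans (F : fieldType) (u v z : 'rV[F]_2) :
  v != 0 -> par u v -> par v z -> par u z.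
Proof.
rewrite /par; set u0 := u ord0 ord0; set u1 := u ord0 ord_max; set v0 := v ord0 ord0;
  set v1 := v ord0 ord_max; set z0 := z ord0 ord0; set z1 := z ord0 ord_max => nz H1 H2.
apply/eqP; rewrite -subr_eq0.
case: (rv2_nz nz) => h; rewrite -?/v0 -?/v1 in h.
- suff: v0 * (u0 * z1 - u1 * z0) == 0 by rewrite mulf_eq0 (negbTE h).
  apply/eqP.
  have -> : v0 * (u0 * z1 - u1 * z0) = u0 * (v0 * z1 - v1 * z0) + z0 * (u0 * v1 - u1 * v0) by ring.
  by rewrite H1 H2 !subrr !mulr0 addr0.
- suff: v1 * (u0 * z1 - u1 * z0) == 0 by rewrite mulf_eq0 (negbTE h).
  apply/eqP.
  have -> : v1 * (u0 * z1 - u1 * z0) = u1 * (v0 * z1 - v1 * z0) + z1 * (u0 * v1 - u1 * v0) by ring.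
  by rewrite H1 H2 !subrr !mulr0 addr0.
Qed.

Lemma cw2 (M : finType) (F : fieldType) L (W' : {set M}) (V : M -> 'rV[F]_L) b a g al :
  b \in W' -> a \in W' -> a != b ->
  codeword W' V (fun l => if l == b then g else if l == a then al else 0) = g *: V b + al *: V a.
Proof.
move=> bW aW ab.
rewrite (cw_sub (A := [set b; a])).
- by rewrite big_setU1 ?inE 1?eq_sym //= big_set1 eqxx (negbTE ab) eqxx.
- by move=> l; rewrite !inE negb_or => /andP[/negbTE-> /negbTE->].
- by apply/subsetP => l; rewrite !inE => /orP[]/eqP->.
Qed.

Lemma cw3 (M : finType) (F : fieldType) L (W' : {set M}) (V : M -> 'rV[F]_L) k a b g al be :
  k \in W' -> a \in W' -> b \in W' -> a != k -> b != k -> a != b ->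
  codeword W' V (fun l => if l == k then g else if l == a then al else if l == b then be else 0)
  = g *: V k + (al *: V a + be *: V b).
Proof.
move=> kW aW bW ak bk ab.
rewrite (cw_sub (A := k |: (a |: [set b]))).
- rewrite big_setU1 ?inE 1?negb_or ?(eq_sym k a) ?(eq_sym k b) ?ak ?bk //=.
  rewrite big_setU1 ?inE //= big_set1 eqxx (negbTE ak) (negbTE bk) (negbTE ab) eqxx.
  by rewrite eq_sym (negbTE ab) eqxx.
- by move=> l; rewrite !inE !negb_or => /andP[/negbTE-> /andP[/negbTE-> /negbTE->]].
- by apply/subsetP => l; rewrite !inE => /or3P[]/eqP->.
Qed.

Section P1.
Variables (M R : finType) (D S : R -> {set M}) (W' : {set M}) (F : fieldType) (V : M -> 'rV[F]_2).
Hypothesis HI : index_problem D S.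
Hypothesis Hv : valid_rcode D S W' V.

Lemma nzV i : i \in W' -> V i != 0.
Proof.
move=> iW; case: HI => [_ Hex]; case: (Hex i) => j iD.
have kd : i \in rdemand D W' j by rewrite /rdemand inE iD.
have rj : rreceiver D W' j by rewrite /rreceiver; apply/set0Pn; exists i.
case: (Hv rj kd) => dec Hdec.
apply/eqP => V0.
have h1 : codeword W' V (fun l => if l == i then 1 else 0) = 0.
  rewrite (cw_sub (A := [set i])) ?sub1set // ?big_set1 ?eqxx ?scale1r //.
  by move=> l; rewrite inE; case: eqP.
have h2 : forall l, l \in rside S W' j -> (if l == i then 1 else 0) = 0 :> F.
  move=> l ls; case: eqP => // li; subst.
  by rewrite (negbTE (notin_side HI kd)) in ls.
by have := kill Hdec h1 h2; rewrite eqxx => /eqP; rewrite oner_eq0.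
Qed.

Lemma edge_par a b : ralign_edge D S W' a b -> par (V a) (V b).
Proof.
case/and4P=> aW bW ab /existsP[j /andP[rj /existsP[k /and4P[kd kab aS bS]]]].
have kW : k \in W' by move: kd; rewrite /rdemand inE => /andP[].
move: kab; rewrite !inE negb_or => /andP[ka kb].
case: (Hv rj kd) => dec Hdec.
rewrite /par; apply/eqP; rewrite -subr_eq0; apply/negPn/negP => dnz.
set d := _ - _ in dnz.
set al := - (V k ord0 ord0 * V b ord0 ord_max - V k ord0 ord_max * V b ord0 ord0).
set be := - (V a ord0 ord0 * V k ord0 ord_max - V a ord0 ord_max * V k ord0 ord0).
have h1 : codeword W' V
   (fun l => if l == k then d else if l == a then al else if l == b then be else 0) = 0.
  rewrite cw3 // 1?eq_sym //; apply/rowP => l; rewrite !mxE.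
  by case: (ord2P l) => ->; rewrite /d /al /be; ring.
have h2 : forall l, l \in rside S W' j ->
   (if l == k then d else if l == a then al else if l == b then be else 0) = 0.
  move=> l ls; case: eqP => [lk|_]; first by subst; rewrite (negbTE (notin_side HI kd)) in ls.
  case: eqP => [la|_]; first by subst; rewrite ls in aS.
  by case: eqP => [lb|_]; first by subst; rewrite ls in bS.
by have := kill Hdec h1 h2; rewrite eqxx => /eqP; rewrite (negbTE dnz).
Qed.

Lemma interf_npar j a b : rreceiver D W' j -> a \in rinterf D S W' b j -> ~ par (V a) (V b).
Proof.
move=> rj; rewrite /rinterf; case: ifP => bd; last by rewrite inE.
rewrite in_setD in_setU1 negb_or => /andP[/andP[ab aS] aW].
have bW : b \in W' by move: bd; rewrite /rdemand inE => /andP[].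
case: (Hv rj bd) => dec Hdec.
rewrite /par => hp.
case: (rv2_nz (nzV aW)) => h.
- have h1 : codeword W' V (fun l => if l == b then V a ord0 ord0 else
             if l == a then - V b ord0 ord0 else 0) = 0.
    rewrite cw2 //; apply/rowP => l; rewrite !mxE.
    case: (ord2P l) => -> /=; first ring.
    by apply/eqP; rewrite mulNr subr_eq0 [X in _ == X]mulrC; apply/eqP; exact: hp.
  have h2 : forall l, l \in rside S W' j -> (if l == b then V a ord0 ord0 else
             if l == a then - V b ord0 ord0 else 0) = 0.
    move=> l ls; case: eqP => [lk|_]; first by subst; rewrite (negbTE (notin_side HI bd)) in ls.
    by case: eqP => [la|_]; first by subst; rewrite ls in aS.
  by have := kill Hdec h1 h2; rewrite eqxx => /eqP; rewrite (negbTE h).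
- have h1 : codeword W' V (fun l => if l == b then V a ord0 ord_max else
             if l == a then - V b ord0 ord_max else 0) = 0.
    rewrite cw2 //; apply/rowP => l; rewrite !mxE.
    case: (ord2P l) => -> /=; last ring.
    by apply/eqP; rewrite mulNr subr_eq0 [X in _ == X]mulrC; apply/eqP; exact: esym hp.
  have h2 : forall l, l \in rside S W' j -> (if l == b then V a ord0 ord_max else
             if l == a then - V b ord0 ord_max else 0) = 0.
    move=> l ls; case: eqP => [lk|_]; first by subst; rewrite (negbTE (notin_side HI bd)) in ls.
    by case: eqP => [la|_]; first by subst; rewrite ls in aS.
  by have := kill Hdec h1 h2; rewrite eqxx => /eqP; rewrite (negbTE h).
Qed.

Lemma connect_par a b : a \in W' -> connect (ralign_edge D S W') a b -> par (V a) (V b).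
Proof.
move=> aW /connectP[p pth ->]; elim: p a aW pth => [|c p IH] a aW /=.
  by rewrite /par mulrC.
case/andP=> eac pc.
have cW : c \in W' by case/and4P: eac.
exact: (par_trans (nzV cW) (edge_par eac) (IH c cW pc)).
Qed.

End P1.

Lemma edge_sym (M R : finType) (D S : R -> {set M}) (W' : {set M}) :
  symmetric (ralign_edge D S W').
Proof.
have H : forall a b, ralign_edge D S W' a b -> ralign_edge D S W' b a.
  move=> a b /and4P[aW bW ab /existsP[j /andP[rj /existsP[k /and4P[kd kab aS bS]]]]].
  apply/and4P; split => //; first by rewrite eq_sym.
  apply/existsP; exists j; rewrite rj; apply/existsP; exists k; apply/and4P; split=> //.
  by move: kab; rewrite !inE orbC.
by move=> a b; apply/idP/idP; apply: H.
Qed.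

Section P2.
Variables (M R : finType) (D S : R -> {set M}) (W' : {set M}) (F : finFieldType).
Hypothesis HI : index_problem D S.
Hypothesis Hnc : ~~ has_rinternal_conflict D S W'.
Hypothesis HF : (#|M| <= #|F|)%N.

Let e := ralign_edge D S W'.
Let esym : connect_sym e := sym_connect_sym (@edge_sym M R D S W').

Definition xk (a : M) : F := nth 0 (enum F) (index (fingraph.root e a) (enum M)).

Lemma xk_inj a b : xk a = xk b -> connect e a b.
Proof.
move=> h; apply/(fingraph.rootP esym).
have ltM c : (index (fingraph.root e c) (enum M) < size (enum F))%N.
  rewrite -cardT; apply: leq_trans HF; rewrite cardT index_mem mem_enum //.
move/eqP: h; rewrite /xk nth_uniq ?ltM ?enum_uniq // => /eqP h.
by rewrite -(nth_index (fingraph.root e a) (mem_enum M (fingraph.root e a)))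
           h nth_index // mem_enum.
Qed.

Lemma xk_conn a b : connect e a b -> xk a = xk b.
Proof. by move/(fingraph.rootP esym); rewrite /xk => ->. Qed.

Definition Vk (a : M) : 'rV[F]_2 := \row_(l < 2) (if l == ord0 then 1 else xk a).

Lemma valid2 : valid_rcode D S W' Vk.
Proof.
move=> j rj k kd.
have kW : k \in W' by move: kd; rewrite /rdemand inE => /andP[].
have kS := notin_side HI kd.
have inI i : (i \in rinterf D S W' k j) = [&& i \in W', i != k & i \notin rside S W' j].
  by rewrite /rinterf kd in_setD in_setU1 negb_or andbC andbA.
have noconf i : i \in rinterf D S W' k j -> xk i != xk k.
  move=> ii; apply/negP => /eqP /xk_inj con.
  move/negP: Hnc; apply; apply/existsP; exists i; apply/existsP; exists k.
  move: (ii); rewrite inI => /and3P[iW ik iS].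
  apply/andP; split; last by rewrite /same_ralign_set iW kW.
  rewrite /rconflict iW kW ik /=; apply/existsP; exists j; by rewrite rj ii.
set y := if [pick i in rinterf D S W' k j] is Some i then xk i else xk k + 1.
have yi i : i \in rinterf D S W' k j -> xk i = y.
  rewrite /y; case: pickP => [i0 i0I|]; last by move=> ->.
  move=> iI; case: (eqVneq i i0) => [->//|ii0]; apply: xk_conn; apply: connect1.
  move: iI i0I; rewrite !inI => /and3P[iW ik iS] /and3P[i0W i0k i0S].
  rewrite /e /ralign_edge iW i0W ii0 /=; apply/existsP; exists j; rewrite rj.
  apply/existsP; exists k; rewrite kd iS i0S !inE negb_or.
  by rewrite !(eq_sym k) ik i0k.
have yk : xk k - y != 0.
  rewrite subr_eq0 /y; case: pickP => [i0 i0I|_].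
    by rewrite eq_sym noconf.
  by rewrite -subr_eq0 opprD addrA subrr add0r oppr_eq0 oner_eq0.
pose g i := (xk i - y) / (xk k - y).
exists (fun c s => (c ord0 ord_max - y * c ord0 ord0) / (xk k - y)
                   - \sum_(i in rside S W' j) s i * g i) => w.
have step1 : (codeword W' Vk w ord0 ord_max - y * codeword W' Vk w ord0 ord0) / (xk k - y)
   = \sum_(i in W') w i * g i.
  rewrite /codeword !summxE mulr_sumr -sumrB mulr_suml; apply: eq_bigr => i _.
  rewrite !mxE /= /g; field; done.
have step2 : \sum_(i in W') w i * g i = w k + \sum_(i in rside S W' j) w i * g i.
  rewrite (bigD1 k) //=; congr (_ + _); first by rewrite /g divff // mulr1.
  rewrite (bigID (fun i => i \in rside S W' j)) /= [X in _ + X]big1 ?addr0.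
    apply: eq_bigl => i; case iS: (i \in rside S W' j); last by rewrite andbF.
    rewrite andbT; move: (iS); rewrite /rside inE => /andP[_ ->] /=.
    by apply/eqP => ik; subst; rewrite iS in kS.
  move=> i /andP[/andP[iW ik] iS]; rewrite /g yi ?subrr ?mul0r ?mulr0 //.
  by rewrite inI iW ik iS.
rewrite step1 step2.
have -> : \sum_(i in rside S W' j) (if i \in rside S W' j then w i else 0) * g i
        = \sum_(i in rside S W' j) w i * g i by apply: eq_bigr => i ->.
by rewrite addrK.
Qed.

End P2.

Theorem theorem5 (M R : finType) (D S : R -> {set M}) (W' : {set M}) :
  index_problem D S ->
  (has_rinternal_conflict D S W' ->
     forall (F : finFieldType) (V : M -> 'rV[F]_2), ~ valid_rcode D S W' V) /\
  (~~ has_rinternal_conflict D S W' ->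
     exists N : nat, forall F : finFieldType, (N <= #|F|)%N ->
       exists V : M -> 'rV[F]_2, valid_rcode D S W' V).
Proof.
move=> HI; split.
- move=> /existsP[a /existsP[b /andP[hc hs]]] F V Hv.
  case/and3P: hs => aW bW con.
  have hp := connect_par HI Hv aW con.
  case/and4P: hc => _ _ _ /existsP[j /andP[rj /orP[h|h]]].
    exact: (interf_npar HI Hv rj h hp).
  apply: (interf_npar HI Hv rj h); rewrite /par in hp *.
  by rewrite mulrC -hp mulrC.
- move=> Hnc; exists #|M| => F HF.
  exists (Vk D S W' F); exact: valid2.
Qed.
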